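(* For each integer $n>1$, there exists a connected $(3n-2)$-regular integral graph with $6n$ vertices.
   Context: A graph is integral if all eigenvalues of its adjacency matrix are integers. *)

(* Defs.v *)
From mathcomp Require Import all_boot all_order all_algebra all_field.
Set Implicit Arguments. Unset Strict Implicit. Unset Printing Implicit Defensive.
Import Order.TTheory GRing.Theory Num.Theory.
Local Open Scope ring_scope.

Definition simple_graph (V : finType) (e : rel V) : Prop :=
  symmetric e /\ irreflexive e.

Definition graph_connected (V : finType) (e : rel V) : Prop :=
  forall x y : V, connect e x y.

Definition regular (V : finType) (e : rel V) (k : nat) : Prop :=
  forall x : V, #|[set y | e x y]| = k.

Definition adjmx (N : nat) (e : rel 'I_N) : 'M[algC]_N :=
  \matrix_(i, j) (e i j)%:R.

Definition integral_graph (N : nat) (e : rel 'I_N) : Prop :=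
  forall a : algC, eigenvalue (adjmx e) a -> a \is a Num.int.

(* Main.v *)
Require Import Defs.
From mathcomp Require Import all_boot all_order all_algebra all_field ring.
Set Implicit Arguments. Unset Strict Implicit. Unset Printing Implicit Defensive.
Import Order.TTheory GRing.Theory Num.Theory.

Definition VT n := (bool * 'I_3 * 'I_n)%type.
Definition E n : rel (VT n) := fun u w => (u.1.1 != w.1.1) && ((u.2 != w.2) || (u.1.2 == w.1.2)).
Lemma cardVT n : #|{: VT n}| = (6 * n)%N.
Proof. by rewrite !card_prod card_bool !card_ord. Qed.
Definition gV n (z : VT n) : 'I_(6*n) := cast_ord (cardVT n) (enum_rank z).
Definition fV n (x : 'I_(6*n)) : VT n := enum_val (cast_ord (esym (cardVT n)) x).
Lemma fVK n : cancel (@fV n) (@gV n).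
Proof. by move=> x; rewrite /fV /gV enum_valK cast_ordKV. Qed.
Lemma gVK n : cancel (@gV n) (@fV n).
Proof. by move=> z; rewrite /fV /gV cast_ordK enum_rankK. Qed.
Definition eG n : rel 'I_(6*n) := fun x y => E (fV x) (fV y).
Local Open Scope ring_scope.
Lemma sumVT n (F : VT n -> algC) : \sum_z F z = \sum_(b : bool) \sum_(t : 'I_3) \sum_(i : 'I_n) F ((b,t),i).
Proof.
transitivity (\sum_(bt : bool * 'I_3) \sum_(i : 'I_n) F (bt, i)).
  by rewrite pair_bigA; apply: eq_bigr => -[].
rewrite (pair_bigA _ (fun b t => \sum_(i : 'I_n) F ((b,t),i))).
by apply: eq_bigr => -[].
Qed.

Lemma sum_delta (I : finType) (F : I -> algC) i : \sum_j F j * (j == i)%:R = F i.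
Proof.
rewrite (bigD1 i) //= eqxx mulr1 big1 ?addr0 // => j /negbTE ->.
by rewrite mulr0.
Qed.

Definition Sw n (w : VT n -> algC) b := \sum_(t : 'I_3) \sum_(i : 'I_n) w ((b,t),i).
Definition Tw n (w : VT n -> algC) b i := \sum_(t : 'I_3) w ((b,t),i).

Lemma inner n (w : VT n -> algC) b t i :
  \sum_(t':'I_3) \sum_(j:'I_n) w((b,t'),j) * ((j != i) || (t' == t))%:R
   = Sw w b - Tw w b i + w((b,t),i).
Proof.
have ind : forall x y : bool, ((~~x) || y)%:R = 1 - x%:R + x%:R * y%:R :> algC.
  by case; case; rewrite /=; ring.
transitivity (\sum_(t':'I_3) (\sum_(j : 'I_n) w((b,t'),j) - w((b,t'),i)
                + w((b,t'),i) * (t'==t)%:R)).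
  apply: eq_bigr => t' _.
  under eq_bigr => j _ do rewrite ind mulrDr mulrBr mulr1 mulrA.
  rewrite big_split sumrB /= sum_delta.
  congr (_ - _ + _).
  by rewrite -mulr_suml sum_delta.
by rewrite big_split sumrB /= sum_delta.
Qed.

Lemma keyeq n (w : VT n -> algC) a
  (H : forall u, a * w u = \sum_z w z * (E z u)%:R) b t i :
  a * w ((b,t),i) = Sw w (~~b) - Tw w (~~b) i + w((~~b,t),i).
Proof.
rewrite H sumVT big_bool /E /= -inner.
case: b => /=.
  rewrite [X in X + _]big1 ?add0r //= => t' _; rewrite big1 // => j _; by rewrite mulr0.
rewrite [X in _ + X]big1 ?addr0 //= => t' _; rewrite big1 // => j _; by rewrite mulr0.
Qed.

Lemma Teq n (w : VT n -> algC) a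
  (H : forall u, a * w u = \sum_z w z * (E z u)%:R) b i :
  a * Tw w b i = (Sw w (~~b) - Tw w (~~b) i) *+ 3 + Tw w (~~b) i.
Proof.
rewrite /Tw mulr_sumr.
under eq_bigr => t _ do rewrite (keyeq H).
by rewrite big_split sumr_const card_ord /=.
Qed.

Lemma Seq n (w : VT n -> algC) a
  (H : forall u, a * w u = \sum_z w z * (E z u)%:R) b :
  a * Sw w b = ((3 * n)%:R - 2) * Sw w (~~b).
Proof.
have SE : forall b, Sw w b = \sum_(i : 'I_n) Tw w b i.
  by move=> b'; rewrite /Sw /Tw exchange_big.
rewrite SE mulr_sumr.
under eq_bigr => i _ do rewrite (Teq H).
rewrite big_split /= sumrMnl sumrB sumr_const card_ord -SE.
rewrite natrM; ring.
Qed.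

Lemma sq_of (x : bool -> algC) a k b :
  (forall b, a * x b = k * x (~~b)) -> x b != 0 -> a ^+ 2 = k ^+ 2.
Proof.
move=> H nz; apply: (mulIf nz).
have h1 := H b; have h2 := H (~~b); rewrite negbK in h2.
by rewrite expr2 -mulrA h1 mulrCA h2 mulrA -expr2.
Qed.

Lemma int_of_sq (a c : algC) : c \is a Num.int -> a ^+ 2 = c ^+ 2 -> a \is a Num.int.
Proof.
move=> ci /eqP; rewrite -subr_eq0 subr_sqr mulf_eq0 subr_eq0 => /orP[/eqP->//|].
by rewrite addr_eq0 => /eqP ->; rewrite rpredN.
Qed.

Lemma intT n (w : VT n -> algC) a
  (H : forall u, a * w u = \sum_z w z * (E z u)%:R) (nz : exists u, w u != 0) :
  a \is a Num.int.
Proof.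
have [Hs|Hs] := boolP [exists b, Sw w b != 0].
  case/existsP: Hs => b nzb; apply: (int_of_sq (c := (3*n)%:R - 2)).
    by rewrite rpredB ?rpred_nat.
  exact: (sq_of (Seq H) nzb).
have S0 : forall b, Sw w b = 0.
  by move=> b; apply/eqP; apply: contraNT Hs => nzb; apply/existsP; exists b.
have [Ht|Ht] := boolP [exists bi : bool * 'I_n, Tw w bi.1 bi.2 != 0].
  case/existsP: Ht => -[b i] /= nzb; apply: (int_of_sq (c := -2)).
    by rewrite rpredN rpred_nat.
  apply: (sq_of (x := fun b => Tw w b i)) nzb => b'.
  rewrite (Teq H) S0; ring.
have T0 : forall b i, Tw w b i = 0.
  move=> b i; apply/eqP; apply: contraNT Ht => nzb; apply/existsP; by exists (b, i).
case: nz => -[[b t] i] nzu; apply: (int_of_sq (c := 1)); first exact: rpred1.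
apply: (sq_of (x := fun b => w ((b,t),i))) nzu => b'.
rewrite (keyeq H) S0 T0; ring.
Qed.

Lemma integral_eG n : integral_graph (@eG n).
Proof.
move=> a /eigenvalueP [v Hv nzv].
pose w z := v 0 (gV z).
apply: (intT (w := w)).
  move=> u; rewrite /w.
  have := congr1 (fun M : 'M[algC]_(1, 6*n) => M 0 (gV u)) Hv; rewrite !mxE /= => <-.
  rewrite (reindex (@gV n)) /=; last exact: onW_bij (Bijective (@gVK n) (@fVK n)).
  by apply: eq_bigr => z _; rewrite /adjmx mxE /eG !gVK.
case: (boolP [exists y, v 0 y != 0]) => [/existsP[y hy]|hn].
  by exists (fV y); rewrite /w fVK.
case/negP: nzv; apply/eqP/rowP => y; rewrite !mxE; apply/eqP.
by apply: contraNT hn => h; apply/existsP; exists y.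
Qed.

Lemma simple_eG n : simple_graph (@eG n).
Proof.
split.
  move=> x y; rewrite /eG /E eq_sym; congr (_ && (_ || _)); by rewrite eq_sym.
by move=> x; rewrite /eG /E eqxx.
Qed.

Local Close Scope ring_scope.
From mathcomp Require Import zify.

Lemma sumVTn n (F : VT n -> nat) : \sum_z F z = \sum_(b : bool) \sum_(t : 'I_3) \sum_(i : 'I_n) F ((b,t),i).
Proof.
transitivity (\sum_(bt : bool * 'I_3) \sum_(i : 'I_n) F (bt, i)).
  by rewrite pair_bigA; apply: eq_bigr => -[].
rewrite (pair_bigA _ (fun b t => \sum_(i : 'I_n) F ((b,t),i))).
by apply: eq_bigr => -[].
Qed.

Lemma cnt (I : finType) (i : I) : #|[set j | j != i]| = #|I|.-1.
Proof. by rewrite -(cardsC1 i); apply: eq_card => j; rewrite !inE. Qed.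

Lemma cnt2 (I : finType) (i : I) (c : bool) :
  \sum_(j : I) (if (i != j) || c then 1 else 0) = if c then #|I| else #|I|.-1.
Proof.
case: c.
  by rewrite (eq_bigr (fun _ => 1)) => [|j _]; rewrite ?orbT // sum1_card.
rewrite (bigD1 i) //= eqxx /= add0n -(cnt i) -sum1dep_card.
by apply: eq_bigr => j; rewrite eq_sym => ->.
Qed.

Lemma regular_eG n : 1 < n -> regular (@eG n) (3 * n - 2).
Proof.
move=> n1 x.
rewrite -sum1dep_card big_mkcond /=.
rewrite (reindex (@gV n)) /=; last exact: onW_bij (Bijective (@gVK n) (@fVK n)).
rewrite (eq_bigr (fun z => if E (fV x) z then 1 else 0)); last by move=> z _; rewrite /eG gVK.
rewrite sumVTn big_bool /E.
case: (fV x) => -[b t] i /=.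
have key : \sum_(t0 < 3) \sum_(i0 < n) (if (i != i0) || (t == t0) then 1 else 0) = 3 * n - 2.
  under eq_bigr => t' _ do rewrite cnt2.
  rewrite (bigD1 t) //= eqxx card_ord (eq_bigr (fun _ => n.-1)); last by move=> t' /negbTE; rewrite eq_sym => ->.
  rewrite sum_nat_cond_const cnt card_ord /=; lia.
case: b => /=.
  by rewrite [X in X + _]big1 ?add0n // => ? _; rewrite big1.
by rewrite [X in _ + X]big1 ?addn0 // => ? _; rewrite big1.
Qed.

Lemma other n (i : 'I_n) : 1 < n -> exists m : 'I_n, m != i.
Proof.
move=> n1; have h0 : 0 < n by lia.
exists (if i == Ordinal h0 then Ordinal n1 else Ordinal h0).
by case: (i =P Ordinal h0) => [->|ne] //; apply/eqP => E0; apply: ne.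
Qed.

Lemma same_side n x y : 1 < n -> (fV x).1.1 == (fV y).1.1 -> connect (@eG n) x y.
Proof.
move=> n1; case Hx: (fV x) => [[ub ut] ui]; case Hy: (fV y) => [[wb wt] wi] /= /eqP E1.
have [m hm] := other ui n1.
apply: (connect_trans (y := gV ((~~ub, wt), m))); apply: connect1; rewrite /eG gVK ?Hx ?Hy /E /=.
  by case: ub {Hx E1}; rewrite /= eq_sym hm.
by rewrite E1 eqxx orbT; case: wb {E1 Hy}.
Qed.

Lemma connected_eG n : 1 < n -> graph_connected (@eG n).
Proof.
move=> n1 x y.
case: (boolP ((fV x).1.1 == (fV y).1.1)) => [|hne]; first exact: same_side.
case Hx: (fV x) => [[ub ut] ui].
apply: (connect_trans (y := gV ((~~ub, ut), ui))).
  by apply: connect1; rewrite /eG gVK Hx /E /= !eqxx orbT; case: ub {Hx}.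
apply: same_side => //; rewrite gVK /=.
move: hne; rewrite Hx /=; by case: ub {Hx}; case: ((fV y).1.1).
Qed.

Theorem corollary4p6 (n : nat) : (1 < n)%N ->
  exists e : rel 'I_(6 * n),
    [/\ simple_graph e, graph_connected e, regular e (3 * n - 2) & integral_graph e].
Proof.
move=> n1; exists (@eG n); split.
- exact: simple_eG.
- exact: connected_eG.
- exact: regular_eG.
- exact: integral_eG.
Qed.
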